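(* Let $n,d \geq 1$. The morphism $\mathbb{P}^1\times\mathbb{P}^n \to \mathbb{P}^{2(n+1)}$ given by \[[x_0:x_1]\times[y_0:\ldots:y_n] \mapsto [x_0^dy_0 : x_0^dy_1 : \ldots : x_0^dy_{n-1} : x_0^dy_n : x_1^dy_n : dx_0x_1^{d-1}y_0 : x_1^dy_0 + dx_0x_1^{d-1}y_1 : x_1^dy_1 + dx_0x_1^{d-1}y_2 : \ldots : x_1^dy_{n-1} + dx_0x_1^{d-1}y_n]\] is injective. In particular, $\operatorname{injdim}(\mathbb{P}^1\times\mathbb{P}^n,\mathcal{O}(d,1)) \leq 2(n+1)$.
   Context: Over $\mathbb{C}$. For a line bundle $\mathscr{L}$ on a projective variety $X$ and a nonzero subspace $V \subseteq H^0(X,\mathscr{L})$, $\varphi_V \colon X \dashrightarrow \mathbb{P}(V^* )$ is the rational map given by the sections in $V$; $\operatorname{injdim}(X,\mathscr{L}) := \inf\{\dim V - 1 : \varphi_V \text{ is an injective morphism}\}$. *)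

(* Defs.v *)
From HB Require Import structures.
From mathcomp Require Import all_boot all_order all_algebra.
From mathcomp Require Import complex.
From mathcomp Require Import Rstruct.
Set Implicit Arguments. Unset Strict Implicit. Unset Printing Implicit Defensive.
Import Order.TTheory GRing.Theory Num.Theory.
Local Open Scope ring_scope.

Definition C : fieldType := complex Rdefinitions.R.

Definition proj_eq (m : nat) (v w : 'rV[C]_m) : Prop :=
  exists2 l : C, l != 0 & v = l *: w.

(** coordinate i of a row vector, given as a nat (only used for i < m) *)
Definition crd (m : nat) (v : 'rV[C]_m.+1) (i : nat) : C := v ord0 (inord i).

Definition themap (n d : nat) (x : 'rV[C]_2) (y : 'rV[C]_n.+1)
    : 'rV[C]_((2 * n.+1).+1) :=
  let x0 := x ord0 0%R in
  let x1 := x ord0 1%R in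
  \row_(k < (2 * n.+1).+1)
    if (k <= n)%N then x0 ^+ d * crd y k
    else if k == n.+1 :> nat then x1 ^+ d * crd y n
    else if k == n.+2 :> nat then d%:R * x0 * x1 ^+ d.-1 * crd y 0
    else x1 ^+ d * crd y (k - n.+3)%N
         + d%:R * x0 * x1 ^+ d.-1 * crd y (k - n.+3).+1.

(** Global sections of O(d,1) on P^1 x P^n: bihomogeneous polynomials of
    bidegree (d,1) in ([x0:x1],[y0:..:yn]), encoded by their coefficient
    matrix c : the section is  sum_(a<=d, j<=n) c a j x0^a x1^(d-a) y_j. *)
Definition sections (n d : nat) := 'M[C]_(d.+1, n.+1).

Definition sec_eval (n d : nat) (c : sections n d) (x : 'rV[C]_2)
    (y : 'rV[C]_n.+1) : C :=
  \sum_(a < d.+1) \sum_(j < n.+1)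
     c a j * x ord0 0%R ^+ a * x ord0 1%R ^+ (d - a) * y ord0 j.

(** phi_V is a morphism: no base points, i.e. for every point some
    section of V does not vanish there. *)
Definition phiV_morphism (n d : nat) (V : {vspace sections n d}) : Prop :=
  forall (x : 'rV[C]_2) (y : 'rV[C]_n.+1), x != 0 -> y != 0 ->
    exists2 s, s \in V & sec_eval s x y != 0.

(** phi_V is injective: phi_V(p) is the point [ev_p] of P(dual of V), so
    phi_V(p) = phi_V(q) iff ev_p and ev_q are proportional on V. *)
Definition phiV_injective (n d : nat) (V : {vspace sections n d}) : Prop :=
  forall (x x' : 'rV[C]_2) (y y' : 'rV[C]_n.+1),
    x != 0 -> y != 0 -> x' != 0 -> y' != 0 ->
    (exists2 l : C, l != 0 &
       forall s, s \in V -> sec_eval s x y = l * sec_eval s x' y') ->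
    proj_eq x x' /\ proj_eq y y'.

(** injdim(P^1 x P^n, O(d,1)) <= N : the infimum (over nat) of
    dim V - 1, over nonzero V with phi_V an injective morphism, is <= N,
    i.e. some such V has dim V - 1 <= N. *)
Definition injdim_le (n d N : nat) : Prop :=
  exists V : {vspace sections n d},
    [/\ V != 0%VS, phiV_morphism V, phiV_injective V & ((\dim V).-1 <= N)%N].

(* Main.v *)
Require Import Defs.
From HB Require Import structures.
From mathcomp Require Import all_boot all_order all_algebra.
From mathcomp Require Import complex Rstruct ring zify.
Import GRing.Theory Num.Theory.
Local Open Scope ring_scope.

Lemma natC (d : nat) : (0 < d)%N -> (d%:R : C) != 0.
Proof. move=> h. rewrite pnatr_eq0. by rewrite -lt0n. Qed.

Lemma down (n : nat) (be ga : C) (Z : nat -> C) : be != 0 -> be * Z n = 0 ->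
  (forall i, (i < n)%N -> be * Z i + ga * Z i.+1 = 0) ->
  forall k, (k <= n)%N -> Z k = 0.
Proof.
move=> hb h0 hs.
have key: forall m, (m <= n)%N -> Z (n - m)%N = 0.
  elim=> [|m IH] hm; first by move/eqP: h0; rewrite subn0 mulf_eq0 (negbTE hb) => /eqP.
  have hi : (n - m.+1 < n)%N by lia.
  have := hs _ hi; rewrite subnSK // IH ?mulr0 ?addr0; last by lia.
  by move/eqP; rewrite mulf_eq0 (negbTE hb) => /eqP.
move=> k hk; have := key (n - k)%N (leq_subr _ _); by rewrite subKn.
Qed.

Lemma core_a (n : nat) (a b c a' b' c' l : C) (Y Y' : nat -> C) :
 l != 0 ->
 (exists2 j, (j <= n)%N & Y' j != 0) ->
 (forall k, (k <= n)%N -> a * Y k = l * (a' * Y' k)) ->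
 b * Y n = l * (b' * Y' n) ->
 c * Y 0%N = l * (c' * Y' 0%N) ->
 (forall i, (i < n)%N -> b * Y i + c * Y i.+1 = l * (b' * Y' i + c' * Y' i.+1)) ->
 a != 0 -> a' != 0 ->
 exists2 t, t != 0 & [/\ a = t * a', b = t * b', c = t * c' &
    exists2 mu, mu != 0 & forall k, (k <= n)%N -> Y k = mu * Y' k].
Proof.
move=> ln [j jn Yj] h1 h2 h3 h4 an a'n.
set mu := l * a' / a.
have mun : mu != 0 by rewrite /mu !mulf_neq0 ?invr_eq0.
have hY : forall k, (k <= n)%N -> Y k = mu * Y' k.
  move=> k kn; apply: (mulfI an); rewrite h1 // /mu; field; exact an.
set t := a / a'.
have hl : l = mu * t by rewrite /mu /t; field; rewrite an a'n.
have e2 : (b - t * b') * Y' n = 0.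
  apply: (mulfI mun); rewrite mulr0.
  transitivity (b * (mu * Y' n) - l * (b' * Y' n)); first by rewrite hl; ring.
  by rewrite -hY // h2 subrr.
have e4 : forall i, (i < n)%N -> (b - t * b') * Y' i + (c - t * c') * Y' i.+1 = 0.
  move=> i hi; apply: (mulfI mun); rewrite mulr0.
  transitivity (b * (mu * Y' i) + c * (mu * Y' i.+1) - l * (b' * Y' i + c' * Y' i.+1)); first by rewrite hl; ring.
  by rewrite -!hY ?(ltnW hi) // h4 // subrr.
have e3 : (c - t * c') * Y' 0%N = 0.
  apply: (mulfI mun); rewrite mulr0.
  transitivity (c * (mu * Y' 0%N) - l * (c' * Y' 0%N)); first by rewrite hl; ring.
  by rewrite -hY // h3 subrr.
have be0 : b - t * b' = 0.
  apply/eqP/negPn/negP => bn.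
  by move: Yj; rewrite (down _ _ _ _ bn e2 e4 _ jn) eqxx.
have ga0 : c - t * c' = 0.
  have : (c - t * c') * Y' j = 0.
    case: j jn Yj => [|j] jn Yj; first exact: e3.
    by have := e4 j jn; rewrite be0 mul0r add0r.
  by move/eqP; rewrite mulf_eq0 (negbTE Yj) orbF => /eqP.
exists t; first by rewrite /t mulf_neq0 ?invr_eq0.
split.
- by rewrite /t; field.
- by apply/eqP; rewrite -subr_eq0 be0.
- by apply/eqP; rewrite -subr_eq0 ga0.
by exists mu.
Qed.

Lemma pow_eq (e : nat) (u v : C) : u ^+ e.+1 = v ^+ e.+1 -> u ^+ e = v ^+ e -> u = v.
Proof.
move=> h1 h2.
have [ue|ue] := eqVneq (u ^+ e) 0.
  move/eqP: (ue); rewrite expf_eq0 => /andP [e0 /eqP u0].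
  move/eqP: ue; rewrite h2 expf_eq0 e0 /= => /eqP ->; exact u0.
apply: (mulIf ue); rewrite -exprS h2 -exprS; exact h1.
Qed.

Lemma xpart (e : nat) (x0 x1 x0' x1' t : C) : x0 != 0 -> x0' != 0 ->
 x0 ^+ e.+1 = t * x0' ^+ e.+1 -> x1 ^+ e.+1 = t * x1' ^+ e.+1 ->
 e.+1%:R * x0 * x1 ^+ e = t * (e.+1%:R * x0' * x1' ^+ e) -> x1 = x0 / x0' * x1'.
Proof.
move=> h0 h0' ha hb hc.
set la := x0 / x0'.
have hx0 : x0 = la * x0' by rewrite /la; field.
have ht : t = la ^+ e.+1.
  apply: (mulIf (expf_neq0 e.+1 h0')); rewrite -ha hx0 exprMn //.
have lan : la != 0 by rewrite /la mulf_neq0 ?invr_eq0.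
clearbody la.
apply: (@pow_eq e).
  by rewrite hb ht exprMn.
have hc' : x0 * x1 ^+ e = t * (x0' * x1' ^+ e).
  apply: (@mulfI _ (e.+1%:R)); first exact: natC.
  rewrite !mulrA hc; ring.
apply: (mulfI (mulf_neq0 lan h0')).
transitivity (x0 * x1 ^+ e); first by rewrite hx0.
rewrite hc' ht exprMn exprS; ring.
Qed.

Definition fA d (x : 'rV[C]_2) := x ord0 0 ^+ d.
Definition fB d (x : 'rV[C]_2) := x ord0 1 ^+ d.
Definition fC (d : nat) (x : 'rV[C]_2) := d%:R * x ord0 0 * x ord0 1 ^+ d.-1.

Lemma themapE n d x (y : 'rV[C]_n.+1) k : (k < (2 * n.+1).+1)%N ->
  themap d x y ord0 (inord k) =
    if (k <= n)%N then fA d x * crd y k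
    else if k == n.+1 then fB d x * crd y n
    else if k == n.+2 then fC d x * crd y 0
    else fB d x * crd y (k - n.+3)%N + fC d x * crd y (k - n.+3).+1.
Proof. by move=> hk; rewrite /themap mxE inordK. Qed.

Lemma extract n d (x x' : 'rV[C]_2) (y y' : 'rV[C]_n.+1) l :
 themap d x y = l *: themap d x' y' ->
 [/\ forall k, (k <= n)%N -> fA d x * crd y k = l * (fA d x' * crd y' k),
     fB d x * crd y n = l * (fB d x' * crd y' n),
     fC d x * crd y 0 = l * (fC d x' * crd y' 0) &
     forall i, (i < n)%N -> fB d x * crd y i + fC d x * crd y i.+1
        = l * (fB d x' * crd y' i + fC d x' * crd y' i.+1)].
Proof.
move=> H.
have E : forall k, (k < (2 * n.+1).+1)%N ->
   themap d x y ord0 (inord k) = l * themap d x' y' ord0 (inord k).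
  by move=> k hk; rewrite H mxE.
split.
- move=> k hk; have := E k; rewrite !themapE ?hk //; [apply; lia | lia | lia].
- have := E n.+1; rewrite !themapE; last 2 first; [lia | lia |].
  rewrite ltnn eqxx; apply; lia.
- have := E n.+2; rewrite !themapE; last 2 first; [lia | lia |].
  have -> : (n.+2 <= n)%N = false by lia.
  have -> : (n.+2 == n.+1) = false by lia.
  rewrite eqxx; apply; lia.
- move=> i hi; have := E (n.+3 + i)%N; rewrite !themapE; last 2 first; [lia | lia |].
  have -> : (n.+3 + i <= n)%N = false by lia.
  have -> : (n.+3 + i == n.+1) = false by lia.
  have -> : (n.+3 + i == n.+2) = false by lia.
  rewrite addKn; apply; lia.
Qed.

Lemma rowV2 (x x' : 'rV[C]_2) (la : C) :
  x ord0 0 = la * x' ord0 0 -> x ord0 1 = la * x' ord0 1 -> x = la *: x'.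
Proof.
move=> h0 h1; apply/rowP => j; rewrite mxE.
case: j => [[|[|//]]] Hj.
  by have -> : Ordinal Hj = 0 by apply: val_inj.
by have -> : Ordinal Hj = 1 by apply: val_inj.
Qed.

Lemma xnz (x : 'rV[C]_2) : x != 0 -> x ord0 0 = 0 -> x ord0 1 != 0.
Proof.
move=> xn h0; apply/negP => /eqP h1; move/negP: xn; apply.
by apply/eqP; rewrite -(scale0r x) ; apply: rowV2; rewrite ?h0 ?h1 mul0r.
Qed.

Lemma rowY n (y y' : 'rV[C]_n.+1) (mu : C) :
  (forall k, (k <= n)%N -> crd y k = mu * crd y' k) -> y = mu *: y'.
Proof.
move=> h; apply/rowP => j; rewrite mxE.
have := h j; rewrite /crd !inord_val; apply.
by rewrite -ltnS.
Qed.

Lemma ynz n (y : 'rV[C]_n.+1) : y != 0 -> exists2 j, (j <= n)%N & crd y j != 0.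
Proof.
move=> yn; case: (pickP (fun j : 'I_n.+1 => y ord0 j != 0)) => [j hj | h].
  by exists j; [rewrite -ltnS | rewrite /crd inord_val].
move/negP: yn; case; apply/eqP/rowP => j; rewrite !mxE.
by move/negbFE/eqP: (h j).
Qed.

Lemma part1 n d (hd : (1 <= d)%N) (x : 'rV[C]_2) (y : 'rV[C]_n.+1) :
  x != 0 -> y != 0 -> themap d x y != 0.
Proof.
move=> xn yn; apply/negP => /eqP H.
have H' : themap d x y = 0 *: themap d x y by rewrite scale0r.
case: (extract _ _ _ _ _ _ _ H') => h1 h2 h3 h4.
case: (ynz _ _ yn) => j jn; apply/negP; rewrite negbK.
have [x0|x0] := eqVneq (x ord0 0) 0.
  have x1 := xnz _ xn x0.
  have fBn : fB d x != 0 by rewrite /fB expf_neq0.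
  have fC0 : fC d x = 0 by rewrite /fC x0 mulr0 mul0r.
  case: (ltngtP j n) jn => // [jn _|-> _].
    move: (h4 j jn); rewrite fC0 !mul0r addr0 => /eqP.
    by rewrite mulf_eq0 (negbTE fBn).
  by move/eqP: h2; rewrite mul0r mulf_eq0 (negbTE fBn).
have fAn : fA d x != 0 by rewrite /fA expf_neq0.
by move/eqP: (h1 j jn); rewrite mul0r mulf_eq0 (negbTE fAn).
Qed.

Lemma part2 n d (hd : (1 <= d)%N) (x x' : 'rV[C]_2) (y y' : 'rV[C]_n.+1) :
  x != 0 -> y != 0 -> x' != 0 -> y' != 0 ->
  proj_eq (themap d x y) (themap d x' y') ->
  proj_eq x x' /\ proj_eq y y'.
Proof.
move=> xn yn x'n y'n [l ln H].
case: (extract _ _ _ _ _ _ _ H) => h1 h2 h3 h4.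
have [j jn Yj] := ynz _ _ yn.
have [j' jn' Yj'] := ynz _ _ y'n.
have hAA : fA d x' = 0 -> fA d x = 0.
  move=> e; move/eqP: (h1 j jn); rewrite e mul0r mulr0 mulf_eq0 (negbTE Yj) orbF.
  by move/eqP.
have hAA' : fA d x = 0 -> fA d x' = 0.
  move=> e; move/eqP: (h1 j' jn'); rewrite e mul0r eq_sym mulf_eq0 (negbTE ln) /=.
  by rewrite mulf_eq0 (negbTE Yj') orbF => /eqP.
have [x0|x0] := eqVneq (x ord0 0) 0.
  have x1 := xnz _ xn x0.
  have fA0 : fA d x = 0 by rewrite /fA x0 expr0n eqn0Ngt hd.
  have x0' : x' ord0 0 = 0.
    by move/eqP: (hAA' fA0); rewrite /fA expf_eq0 => /andP [_ /eqP].
  have x1' := xnz _ x'n x0'.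
  have fBn : fB d x != 0 by rewrite /fB expf_neq0.
  have fBn' : fB d x' != 0 by rewrite /fB expf_neq0.
  have fC0 : fC d x = 0 by rewrite /fC x0 mulr0 mul0r.
  have fC0' : fC d x' = 0 by rewrite /fC x0' mulr0 mul0r.
  split.
    exists (x ord0 1 / x' ord0 1); first by rewrite mulf_neq0 ?invr_eq0.
    apply: rowV2; first by rewrite x0 x0' mulr0.
    by field.
  exists (l * fB d x' / fB d x); first by rewrite !mulf_neq0 ?invr_eq0.
  apply: rowY => k kn; apply: (mulfI fBn).
  case: (ltngtP k n) kn => // [kn _|-> _].
    move: (h4 k kn); rewrite fC0 fC0' !mul0r !addr0 => ->; field.
    exact fBn.
  rewrite h2; field; exact fBn.
have fAn : fA d x != 0 by rewrite /fA expf_neq0.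
have fAn' : fA d x' != 0 by apply/negP => /eqP /hAA /eqP; apply/negP.
have x0' : x' ord0 0 != 0.
  by apply/negP => /eqP e; move: fAn'; rewrite /fA e expr0n eqn0Ngt hd /= eqxx.
case: (core_a _ _ _ _ _ _ _ _ _ _ ln (ex_intro2 _ _ j' jn' Yj') h1 h2 h3 h4 fAn fAn')
  => t tn [ea eb ec [mu mun hY]].
split; last by exists mu => //; apply: rowY.
exists (x ord0 0 / x' ord0 0); first by rewrite mulf_neq0 ?invr_eq0.
apply: rowV2; first by field.
destruct d as [|e]; first by [].
apply: (xpart _ _ _ _ _ _ x0 x0' ea eb).
by move: ec; rewrite /fC.
Qed.

Lemma sec_eval_delta n d (i : 'I_d.+1) (j : 'I_n.+1) x y :
  sec_eval (delta_mx i j : sections n d) x y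
    = x ord0 0 ^+ i * x ord0 1 ^+ (d - i) * y ord0 j.
Proof.
rewrite /sec_eval (eq_bigr (fun a : 'I_d.+1 =>
   if a == i then x ord0 0 ^+ a * x ord0 1 ^+ (d - a) * y ord0 j else 0)).
  by rewrite -big_mkcond /= big_pred1_eq.
move=> a _; rewrite (bigD1 j) //= [X in _ + X]big1 ?addr0 => [|b bj]; rewrite mxE.
  by case: (a == i); rewrite eqxx /= ?mul1r ?mul0r.
by rewrite (negbTE bj) andbF /= !mul0r.
Qed.

Lemma sec_evalD n d (c1 c2 : sections n d) x y :
  sec_eval (c1 + c2) x y = sec_eval c1 x y + sec_eval c2 x y.
Proof.
rewrite /sec_eval -big_split; apply: eq_bigr => a _.
rewrite -big_split; apply: eq_bigr => j _; by rewrite mxE !mulrDl.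
Qed.

Lemma sec_evalZ n d (k : C) (c : sections n d) x y :
  sec_eval (k *: c) x y = k * sec_eval c x y.
Proof.
rewrite /sec_eval mulr_sumr; apply: eq_bigr => a _.
rewrite mulr_sumr; apply: eq_bigr => j _; rewrite mxE; ring.
Qed.

Lemma sec_eval0 n d x y : sec_eval (0 : sections n d) x y = 0.
Proof. by rewrite -(scale0r (0 : sections n d)) sec_evalZ mul0r. Qed.

Definition secs n d (k : nat) : sections n d :=
  if (k <= n)%N then delta_mx (inord d) (inord k)
  else if k == n.+1 then delta_mx (inord 0) (inord n)
  else if k == n.+2 then d%:R *: delta_mx (inord 1) (inord 0)
  else delta_mx (inord 0) (inord (k - n.+3)) +
       d%:R *: delta_mx (inord 1) (inord (k - n.+3).+1).

Lemma secsE n d (hd : (1 <= d)%N) k x y : (k < (2 * n.+1).+1)%N ->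
  sec_eval (secs n d k) x y = themap d x y ord0 (inord k).
Proof.
move=> hk; rewrite themapE // /secs /fA /fB /fC /crd.
have i0 : ((0 : nat) < d.+1)%N by [].
have i1 : (1 < d.+1)%N by [].
have id : (d < d.+1)%N by [].
case: ifP => _.
  by rewrite sec_eval_delta inordK // subnn expr0 mulr1.
case: ifP => _.
  by rewrite sec_eval_delta inordK // subn0 expr0 mul1r.
case: ifP => _.
  by rewrite sec_evalZ sec_eval_delta inordK // subn1 expr1 !mulrA.
rewrite sec_evalD sec_evalZ !sec_eval_delta !inordK // subn0 subn1 expr0 expr1 mul1r.
by rewrite !mulrA.
Qed.

Lemma part3 n d (hd : (1 <= d)%N) : injdim_le n d (2 * n.+1).
Proof.
set X := [seq secs n d k | k <- iota 0 (2 * n.+1).+1].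
set V := <<X>>%VS.
have inV : forall k, (k < (2 * n.+1).+1)%N -> secs n d k \in V.
  move=> k hk; apply: memv_span; apply: map_f; by rewrite mem_iota.
have mor : phiV_morphism V.
  move=> x y xn yn.
  have := part1 _ _ hd _ _ xn yn.
  case: (pickP (fun k => themap d x y ord0 k != 0)) => [k hk _ | h].
    exists (secs n d k); first exact: inV.
    by rewrite secsE // inord_val.
  move/negP; case; apply/eqP/rowP => j; rewrite !mxE.
  by move/negbFE/eqP: (h j); rewrite mxE.
exists V; split => //.
- apply/negP => /eqP V0.
  have x1 : (const_mx 1 : 'rV[C]_2) != 0.
    by apply/negP => /eqP/rowP/(_ ord0); rewrite !mxE; apply/eqP; exact: oner_neq0.
  have y1 : (const_mx 1 : 'rV[C]_n.+1) != 0.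
    by apply/negP => /eqP/rowP/(_ ord0); rewrite !mxE; apply/eqP; exact: oner_neq0.
  case: (mor _ _ x1 y1) => s; rewrite V0 memv0 => /eqP ->.
  by rewrite sec_eval0 eqxx.
- move=> x x' y y' xn yn x'n y'n [l ln hl].
  apply: (part2 _ _ hd _ _ _ _ xn yn x'n y'n).
  exists l => //; apply/rowP => k.
  have e := secsE n d hd k x y (ltn_ord k).
  have e' := secsE n d hd k x' y' (ltn_ord k).
  rewrite inord_val in e e'.
  rewrite (_ : (l *: themap d x' y') ord0 k = l * themap d x' y' ord0 k); last by rewrite !mxE.
  rewrite -e -e'; apply: hl; exact: inV.
- have := dim_span X; rewrite size_map size_iota => h.
  by move: h; rewrite -/X -/V; case: (\dim V).
Qed.

Theorem theorem4p6 (n d : nat) (hn : (1 <= n)%N) (hd : (1 <= d)%N) :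
  (* the map is a well-defined morphism P^1 x P^n -> P^(2(n+1)) *)
  (forall (x : 'rV[C]_2) (y : 'rV[C]_n.+1),
      x != 0 -> y != 0 -> themap d x y != 0) /\
  (* it is injective *)
  (forall (x x' : 'rV[C]_2) (y y' : 'rV[C]_n.+1),
      x != 0 -> y != 0 -> x' != 0 -> y' != 0 ->
      proj_eq (themap d x y) (themap d x' y') ->
      proj_eq x x' /\ proj_eq y y') /\
  (* in particular injdim(P^1 x P^n, O(d,1)) <= 2(n+1) *)
  injdim_le n d (2 * n.+1).
Proof.
split; first exact: part1.
split; first exact: part2.
exact: part3.
Qed.
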